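(* Fix a round with load $v>0$ for agent $i$. Suppose the allocation is the MMF output for entitlements $e$, where agent $i$'s reported demand is $d_i=\hat\rho\,v$ for some $\hat\rho\ge0$ and the other agents' reported demands are arbitrary, and let $a_i$ be agent $i$'s allocation. Let $\bar\rho\ge\max(\rho_i,\hat\rho)$. Then $u_i(e_i/v)-u_i(a_i/v)\le L_i(\bar\rho-\hat\rho)$.
   Context: A divisible resource of size $1$ is shared by $n$ agents with entitlements $e_i>0$, $\sum_ie_i=1$. MMF$(e,d)$ on reported demands $d_1,\dots,d_n\ge0$: set $r=1$, $E=1$, $S=\{1,\dots,n\}$, $a=0$; process agents $j$ in ascending order of $d_j/e_j$; if $d_j<re_j/E$, set $a_j=d_j$, remove $j$ from $S$, $r\leftarrow r-d_j$, $E\leftarrow E-e_j$ and continue; otherwise set $a_k=re_k/E$ for all $k\in S$ and stop; output $a$. Agent $i$ has unit demand (demand per unit load) $\rho_i\ge0$ and a utility $u_i$ of allocation per unit load that is strictly increasing on $[0,\rho_i]$, constant on $[\rho_i,\infty)$, and $L_i$-Lipschitz. *)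

(* Defs.v *)
From HB Require Import structures.
From mathcomp Require Import all_boot all_order all_algebra.
From mathcomp Require Import reals.
Set Implicit Arguments. Unset Strict Implicit. Unset Printing Implicit Defensive.
Import Order.TTheory GRing.Theory Num.Theory.
Local Open Scope ring_scope.

(* The MMF procedure run along a processing order [s] (a list of agents).
   [r] = remaining resource, [E] = remaining total entitlement, the agents
   still in S are exactly those in [s]. *)
Fixpoint mmf_aux (I : eqType) (R : realFieldType) (e d : I -> R)
    (r E : R) (s : seq I) : I -> R :=
  match s with
  | [::] => fun _ => 0
  | j :: s' =>
      if d j < r * e j / E then
        fun k => if k == j then d j else mmf_aux e d (r - d j) (E - e j) s' k
      else fun k => if k \in s then r * e k / E else 0
  end.

Definition mmf (I : eqType) (R : realFieldType) (e d : I -> R) (ord : seq I)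
  : I -> R := mmf_aux e d 1 1 ord.

Definition mmf_order (n : nat) (R : realFieldType) (e d : 'I_n -> R)
    (ord : seq 'I_n) : Prop :=
  perm_eq ord (enum 'I_n) /\ sorted (fun j k => d j / e j <= d k / e k) ord.

(* Main.v *)
Require Import Defs.
From HB Require Import structures.
From mathcomp Require Import all_boot all_order all_algebra.
From mathcomp Require Import reals.
From mathcomp Require Import lra.
Import Order.TTheory GRing.Theory Num.Theory.
Local Open Scope ring_scope.

Lemma mmf_aux_lb (R : realFieldType) (n : nat) (e d : 'I_n -> R)
  (he_pos : forall j, 0 < e j) (i : 'I_n) :
  forall s r E, E = \sum_(k <- s) e k -> E <= r -> i \in s ->
  Num.min (d i) (e i) <= mmf_aux e d r E s i.
Proof.
elim=> [|j s IH] r E hE hEr //.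
rewrite inE => his /=.
have hS : 0 <= \sum_(k <- s) e k by apply: sumr_ge0 => k _; exact: ltW.
have hej := he_pos j.
rewrite big_cons in hE.
have hE0 : 0 < E by rewrite hE; lra.
case: ifP => hlt.
  case: eqP => [->|/eqP hne]; first by rewrite ge_min lexx.
  have his' : i \in s by move: his; rewrite (negbTE hne).
  apply: IH => //; first by rewrite hE; lra.
  have : d j * E < r * e j.
    by rewrite -(@ltr_pM2r _ (E^-1)) ?invr_gt0 // mulfK ?gt_eqF // mulrAC.
  move=> h.
  have h2 : 0 <= (r - E) * (E - e j) by apply: mulr_ge0; lra.
  rewrite -(@ler_pM2r _ E) //. nra.
rewrite inE his ge_min; apply/orP; right.
have hei := he_pos i.
rewrite ler_pdivlMr //. nra.
Qed.

Lemma u_mono (R : realType) (rho : R) (u : R -> R)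
  (hu_incr : forall x y, 0 <= x -> x < y -> y <= rho -> u x < u y)
  (hu_const : forall x, rho <= x -> u x = u rho) x y :
  0 <= x -> x <= y -> u x <= u y.
Proof.
move=> hx hxy.
case: (lerP rho x) => hrx.
  by rewrite hu_const // hu_const //; lra.
case: (lerP y rho) => hyr.
  rewrite le_eqVlt in hxy; case/orP: hxy => [/eqP->//|hxy].
  exact/ltW/hu_incr.
rewrite (hu_const y); last lra.
exact/ltW/hu_incr.
Qed.

Theorem lemma3 (R : realType) (n : nat) (e : 'I_n -> R)
  (he_pos : forall j, 0 < e j) (he_sum : \sum_(j < n) e j = 1)
  (i : 'I_n) (rho L : R) (u : R -> R)
  (hrho : 0 <= rho)
  (hu_incr : forall x y, 0 <= x -> x < y -> y <= rho -> u x < u y)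
  (hu_const : forall x, rho <= x -> u x = u rho)
  (hu_lip : forall x y, 0 <= x -> 0 <= y -> `|u x - u y| <= L * `|x - y|)
  (v rhohat rhobar : R) (hv : 0 < v) (hrhohat : 0 <= rhohat)
  (d : 'I_n -> R) (hd : forall j, 0 <= d j) (hdi : d i = rhohat * v)
  (ord : seq 'I_n) (hord : mmf_order e d ord)
  (hrhobar : Num.max rho rhohat <= rhobar) :
  u (e i / v) - u (mmf e d ord i / v) <= L * (rhobar - rhohat).
Proof.
case: hord => hperm _.
have hlb : Num.min (d i) (e i) <= mmf e d ord i.
  have hs : 1 = \sum_(k <- ord) e k.
    by rewrite (perm_big _ hperm) /= -he_sum big_enum.
  apply: mmf_aux_lb => //.
  by rewrite (perm_mem hperm) mem_enum.
have hL : 0 <= L.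
  have := hu_lip 0 1 (lexx 0) ler01.
  rewrite sub0r normrN normr1 mulr1; apply: le_trans; exact: normr_ge0.
move: hrhobar; rewrite ge_max => /andP [hrb1 hrb2].
have hei := he_pos i.
set a := mmf e d ord i in hlb *.
set x := e i / v; set y := a / v.
have hx : 0 <= x by rewrite /x divr_ge0 // ltW.
have hmin : 0 <= Num.min (d i) (e i) by rewrite le_min hd ltW.
have ha : 0 <= a := le_trans hmin hlb.
have hy : 0 <= y := divr_ge0 ha (ltW hv).
have hmono := @u_mono R rho u hu_incr hu_const.
case: (lerP x y) => hxy.
  have := hmono _ _ hx hxy; have : 0 <= L * (rhobar - rhohat) by apply: mulr_ge0; lra.
  lra.
have hry : rhohat <= y.
  move: hlb; rewrite ge_min => /orP [h|h].
    by rewrite /y ler_pdivlMr // -hdi.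
  exfalso; move: hxy; rewrite /x /y ltr_pM2r ?invr_gt0 //; lra.
have h1 := hmono _ _ hrhohat hry.
suff : u x - u rhohat <= L * (rhobar - rhohat) by lra.
case: (lerP x rhobar) => hxb.
  have := hu_lip _ _ hx hrhohat.
  rewrite (ger0_norm (x := x - rhohat)); last lra.
  move=> h; apply: le_trans (le_trans (ler_norm _) h) _.
  apply: ler_wpM2l => //; lra.
rewrite hu_const; last lra.
rewrite -(hu_const rhobar) //.
have := hu_lip _ _ (le_trans hrhohat hrb2) hrhohat.
rewrite (ger0_norm (x := rhobar - rhohat)); last lra.
by apply: le_trans (ler_norm _).
Qed.
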